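(* Let $S$ be the standard form on $\mathbb{R}^{2m}$. A closed set $G\subset\mathbb{R}^{2m}$ is a linear subspace of $\mathbb{R}^{2m}$ belonging to $\mathcal{M}(S)$ and strictly $S$-monotone if and only if $G=\operatorname{graph}f$, where $f(u)=Au$, $u\in\mathbb{R}^m$, for some positive-definite $m\times m$ matrix $A$.
   Context: Standard form on $\mathbb{R}^{2m}$: $S((r,s),(u,v)):=\langle s,u\rangle+\langle r,v\rangle$, $r,s,u,v\in\mathbb{R}^m$. $G$ is $S$-monotone if $S(x-y,x-y)\ge0$ for $x,y\in G$; strictly $S$-monotone if $S(x-y,x-y)>0$ for all $x\ne y$ in $G$; maximal $S$-monotone if not a strict subset of another $S$-monotone set; $\mathcal{M}(S)$ = family of maximal $S$-monotone sets. An $m\times m$ real matrix $A$ (possibly non-symmetric) is positive-definite if $\langle r,Ar\rangle>0$ for all $r\ne0$. *)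

(* Defs.v *)
(* R^m is represented by column vectors 'cV[R]_m,
   R^{2m} = R^m x R^m by pairs (r, s). *)
From HB Require Import structures.
From mathcomp Require Import all_boot all_order all_algebra.
From mathcomp Require Import all_classical all_reals all_analysis.
Set Implicit Arguments. Unset Strict Implicit. Unset Printing Implicit Defensive.
Import Order.TTheory GRing.Theory Num.Theory.
Import numFieldNormedType.Exports.
Local Open Scope ring_scope.
Local Open Scope classical_set_scope.

Definition dotv (R : realType) (m : nat) (r s : 'cV[R]_m) : R :=
  \sum_(i < m) r i 0 * s i 0.

Definition stdS (R : realType) (m : nat) (x y : 'cV[R]_m * 'cV[R]_m) : R :=
  dotv x.2 y.1 + dotv x.1 y.2.

Definition S_monotone (R : realType) (m : nat) (G : set ('cV[R]_m * 'cV[R]_m)) : Prop :=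
  forall x y, G x -> G y -> 0 <= stdS (x - y) (x - y).

Definition strictly_S_monotone (R : realType) (m : nat)
    (G : set ('cV[R]_m * 'cV[R]_m)) : Prop :=
  forall x y, G x -> G y -> x <> y -> 0 < stdS (x - y) (x - y).

(* G belongs to M(S): S-monotone and not a strict subset of another S-monotone set *)
Definition maximal_S_monotone (R : realType) (m : nat)
    (G : set ('cV[R]_m * 'cV[R]_m)) : Prop :=
  S_monotone G /\
  forall H : set ('cV[R]_m * 'cV[R]_m), S_monotone H -> G `<=` H -> H = G.

Definition linear_subspace (R : realType) (m : nat)
    (G : set ('cV[R]_m * 'cV[R]_m)) : Prop :=
  G 0 /\ (forall x y, G x -> G y -> G (x + y)) /\
  (forall (a : R) x, G x -> G (a *: x)).

Definition posdef (R : realType) (m : nat) (A : 'M[R]_m) : Prop :=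
  forall r : 'cV[R]_m, r != 0 -> 0 < dotv r (A *m r).

Definition graph_of (R : realType) (m : nat) (f : 'cV[R]_m -> 'cV[R]_m)
    : set ('cV[R]_m * 'cV[R]_m) :=
  [set x | x.2 = f x.1].

(* Main.v *)
Require Import Defs.
From HB Require Import structures.
From mathcomp Require Import all_boot all_order all_algebra.
From mathcomp Require Import all_classical all_reals all_analysis.
From mathcomp Require Import ring lra.
Import Order.TTheory GRing.Theory Num.Theory.
Import numFieldNormedType.Exports.
Local Open Scope ring_scope.
Local Open Scope classical_set_scope.

Section Dot.
Variables (R : realType) (m : nat).
Implicit Types r s u : 'cV[R]_m.

Lemma dotvE r s : dotv r s = (r^T *m s) 0 0.
Proof. by rewrite /dotv !mxE; apply: eq_bigr => i _; rewrite mxE. Qed.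

Lemma dotvC r s : dotv r s = dotv s r.
Proof. by rewrite /dotv; apply: eq_bigr => i _; rewrite mulrC. Qed.

Lemma dotvDl r s u : dotv (r + s) u = dotv r u + dotv s u.
Proof. by rewrite /dotv -big_split; apply: eq_bigr => i _; rewrite mxE mulrDl. Qed.

Lemma dotvZl (a : R) r s : dotv (a *: r) s = a * dotv r s.
Proof. by rewrite /dotv mulr_sumr; apply: eq_bigr => i _; rewrite mxE mulrA. Qed.

Lemma dotvNl r s : dotv (- r) s = - dotv r s.
Proof. by rewrite -scaleN1r dotvZl mulN1r. Qed.

Lemma dotvBl r s u : dotv (r - s) u = dotv r u - dotv s u.
Proof. by rewrite dotvDl dotvNl. Qed.

Lemma dotvDr r s u : dotv u (r + s) = dotv u r + dotv u s.
Proof. by rewrite dotvC dotvDl !(dotvC u). Qed.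
Lemma dotvZr (a : R) r s : dotv s (a *: r) = a * dotv s r.
Proof. by rewrite dotvC dotvZl dotvC. Qed.
Lemma dotvNr r s : dotv s (- r) = - dotv s r.
Proof. by rewrite dotvC dotvNl dotvC. Qed.
Lemma dotvBr r s u : dotv u (r - s) = dotv u r - dotv u s.
Proof. by rewrite dotvDr dotvNr. Qed.
Lemma dotv0l r : dotv 0 r = 0.
Proof. by rewrite /dotv big1 // => i _; rewrite mxE mul0r. Qed.
Lemma dotv0r r : dotv r 0 = 0.
Proof. by rewrite dotvC dotv0l. Qed.

Lemma dotv_ge0 r : 0 <= dotv r r.
Proof. by rewrite /dotv sumr_ge0 // => i _; rewrite -expr2 sqr_ge0. Qed.

Lemma dotv_eq0 r : dotv r r = 0 -> r = 0.
Proof.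
move=> /eqP; rewrite /dotv psumr_eq0 => [/allP H|i _]; last by rewrite -expr2 sqr_ge0.
apply/matrixP => i j; rewrite (ord1 j) mxE.
have := H i (mem_index_enum _); rewrite /= mulf_eq0 orbb => /eqP //.
Qed.

Lemma stdS_pair r s : stdS (r, s) (r, s) = dotv s r + dotv r s.
Proof. by []. Qed.

End Dot.

Lemma full_sub (R : realType) (m : nat) (D : set 'cV[R]_m) :
  D 0 -> (forall x y, D x -> D y -> D (x + y)) -> (forall (a : R) x, D x -> D (a *: x)) ->
  (forall w, (forall r, D r -> dotv r w = 0) -> w = 0) ->
  forall u, D u.
Proof.
move=> D0 DD DZ Horth.
have step : forall k (M : 'M[R]_(k, m)), (forall i, D (row i M)^T) -> (\rank M < m)%N ->
    exists d, D d /\ ~~ (d^T <= M)%MS.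
  move=> k M HM Hr; apply: contrapT => Hn.
  have Hall : forall d, D d -> (d^T <= M)%MS.
    move=> d Dd; apply: contrapT => /negP Hd; apply: Hn; by exists d.
  set K := kermx M^T.
  have rK : \rank K = (m - \rank M)%N by rewrite mxrank_ker mxrank_tr.
  have : exists i, row i K != 0.
    apply: contrapT => Hz.
    have K0 : K = 0.
      apply/row_matrixP => i; rewrite row0; apply/eqP; apply: contrapT => Hi.
      by apply: Hz; exists i; apply/negP.
    by move: rK; rewrite K0 mxrank0 => /eqP; rewrite eq_sym subn_eq0 leqNgt Hr.
  move=> [i Hi].
  have Mw : M *m (row i K)^T = 0.
    by rewrite -[M]trmxK -trmx_mul -row_mul mulmx_ker row0 trmx0.
  have : (row i K)^T = 0.
    apply: Horth => r Dr; rewrite dotvE.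
    have /submxP [a ->] := Hall r Dr.
    by rewrite -mulmxA Mw mulmx0 mxE.
  by move=> /(congr1 trmx); rewrite trmxK trmx0 => H0; move: Hi; rewrite H0 eqxx.
have ind : forall n, (n <= m)%N -> exists k (M : 'M[R]_(k, m)),
    (forall i, D (row i M)^T) /\ (n <= \rank M)%N.
  elim=> [|n IH] Hn.
    by exists 0%N, 0; split => // -[].
  have [k [M [HM Hr]]] := IH (ltnW Hn).
  case: (leqP n.+1 (\rank M)) => Hr'; first by exists k, M.
  have Hrn : \rank M = n by apply/eqP; rewrite eqn_leq Hr andbT -ltnS.
  have [d [Dd Hd]] := step k M HM ltac:(by rewrite Hrn).
  exists (k + 1)%N, (col_mx M d^T); split.
    move=> i; rewrite -(splitK i); case: (fintype.split i) => j /=.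
      by rewrite rowKu.
    rewrite rowKd; have -> : row j d^T = d^T by apply/rowP => l; rewrite !mxE (ord1 j).
    by rewrite trmxK.
  have sub : (M <= col_mx M d^T)%MS by rewrite -addsmxE addsmxSl.
  have := mxrank_leqif_sup sub.
  move=> /ltn_leqif; rewrite col_mx_sub (negbTE Hd) andbF => Hlt.
  by rewrite -Hrn Hlt.
have [k [M [HM Hr]]] := ind m (leqnn m).
have Mf : row_full M by rewrite /row_full eqn_leq rank_leq_col Hr.
move=> u; have /submxP [a Ha] := submx_full u^T Mf.
have -> : u = (u^T)^T by rewrite trmxK.
rewrite Ha mulmx_sum_row linear_sum /=.
apply: (big_ind D) => // i _.
by rewrite linearZ /=; apply: DZ.
Qed.

Lemma stdSE (R : realType) (m : nat) (x : 'cV[R]_m * 'cV[R]_m) :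
  stdS x x = dotv x.2 x.1 + dotv x.1 x.2.
Proof. by []. Qed.

Lemma stdSN (R : realType) (m : nat) (x : 'cV[R]_m * 'cV[R]_m) :
  stdS (- x) (- x) = stdS x x.
Proof. by rewrite !stdSE /= !dotvNl !dotvNr !opprK. Qed.

Lemma colsum (R : realType) (m : nat) (A : 'M[R]_m) (r : 'cV[R]_m) :
  A *m r = \sum_j r j 0 *: col j A.
Proof.
apply/matrixP => i k; rewrite (ord1 k) !mxE summxE.
by apply: eq_bigr => j _; rewrite !mxE mulrC.
Qed.

Lemma deltasum (R : realType) (m : nat) (r : 'cV[R]_m) :
  r = \sum_j r j 0 *: (delta_mx j 0 : 'cV[R]_m).
Proof.
apply/matrixP => i k; rewrite (ord1 k) summxE (bigD1 i) //= big1.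
  by rewrite !mxE !eqxx mulr1 addr0.
by move=> j /negbTE ne; rewrite !mxE eq_sym ne mulr0.
Qed.

Lemma pairB (R : realType) (m : nat) (a b c d : 'cV[R]_m) :
  (a, b) - (c, d) = (a - c, b - d).
Proof. by []. Qed.

Theorem lemma13 (R : realType) (m : nat) (G : set ('cV[R]_m * 'cV[R]_m)) :
  closed G ->
  ((linear_subspace G /\ maximal_S_monotone G /\ strictly_S_monotone G) <->
   exists A : 'M[R]_m, posdef A /\ G = graph_of (fun u => A *m u)).
Proof.
move=> _; split.
- move=> [[G0 [GD GZ]] [[Gmon Gmax] Gstr]].
  have Gpos : forall x, G x -> x <> 0 -> 0 < stdS x x.
    by move=> x Gx nx; have := Gstr x 0 Gx G0 nx; rewrite subr0.
  have Gge : forall x, G x -> 0 <= stdS x x.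
    by move=> x Gx; have := Gmon x 0 Gx G0; rewrite subr0.
  have GB : forall x y, G x -> G y -> G (x - y).
    move=> x y Gx Gy; rewrite -scaleN1r; exact: GD _ _ Gx (GZ _ _ Gy).
  have Gz1 : forall s, G (0, s) -> s = 0.
    move=> s Gs; apply: contrapT => ns.
    have : (0, s) <> 0 :> ('cV[R]_m * 'cV[R]_m).
      by move=> /(congr1 snd) /= H; apply: ns.
    move=> /(Gpos _ Gs); rewrite stdSE /= dotv0l dotv0r addr0 ltxx.
    by [].
  set D := [set r | exists s, G (r, s)].
  have Dfull : forall u, D u.
    apply: full_sub.
    - by exists 0.
    - by move=> x y [s Gs] [s' Gs']; exists (s + s'); exact: GD _ _ Gs Gs'.
    - by move=> a x [s Gs]; exists (a *: s); exact: GZ _ _ Gs.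
    move=> w Hw.
    pose H := G `|` [set (0, w)].
    have Hmon : S_monotone H.
      have key : forall x, G x -> 0 <= stdS (x - (0, w)) (x - (0, w)).
        move=> [r s] Gx; rewrite stdSE /= subr0 dotvBl dotvBr.
        have Hrw : dotv r w = 0 by apply: Hw; exists s.
        rewrite (dotvC _ _ w) Hrw !subr0.
        by have := Gge _ Gx; rewrite stdSE.
      move=> x y [Gx|->] [Gy|->].
      + exact: Gmon.
      + exact: key.
      + by rewrite -opprB stdSN; apply: key.
      + by rewrite subrr stdSE /= dotv0l addr0.
    have HG : H = G by apply: Gmax => // x Gx; left.
    have : H (0, w) by right.
    by rewrite HG => /Gz1.
  have [f Hf] := choice (fun j : 'I_m => Dfull (delta_mx j 0)).
  pose A := \matrix_(i < m, j < m) f j i 0.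
  have colA : forall j, col j A = f j.
    by move=> j; apply/matrixP => i k; rewrite (ord1 k) !mxE.
  have GA : forall r, G (r, A *m r).
    move=> r; rewrite colsum {1}(deltasum _ _ r).
    apply: (big_ind2 (fun u v => G (u, v))) => //.
    + by move=> x1 x2 y1 y2 H1 H2; exact: GD _ _ H1 H2.
    + by move=> j _; rewrite colA; exact: GZ _ _ (Hf j).
  have GE : G = graph_of (fun u => A *m u).
    apply/seteqP; split => -[r s]; rewrite /graph_of /=; last by move=> ->; exact: GA.
    move=> Gx.
    apply/eqP; rewrite -subr_eq0; apply/eqP.
    apply: Gz1.
    have -> : ((0 : 'cV[R]_m), s - A *m r) = (r, s) - (r, A *m r) by rewrite pairB subrr.
    exact: GB.
  exists A; split => // r nr.
  have : (r, A *m r) <> 0 :> ('cV[R]_m * 'cV[R]_m).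
    by move=> /(congr1 fst) /= H; move: nr; rewrite H eqxx.
  move=> /(Gpos _ (GA r)); rewrite stdSE /= dotvC.
  by rewrite -mulr2n pmulrn_lgt0.
- move=> [A [HA ->]]; rewrite /graph_of.
  have quad : forall r, stdS (r, A *m r) (r, A *m r) = (dotv r (A *m r)) *+ 2.
    by move=> r; rewrite stdSE /= dotvC mulr2n.
  have Ager : forall r, 0 <= dotv r (A *m r).
    move=> r; case: (eqVneq r 0) => [->|nr]; first by rewrite dotv0l.
    exact/ltW/HA.
  split; [split; [|split]|split; [split|]].
  + by rewrite /graph_of /= mulmx0.
  + by move=> [r s] [r' s'] /= -> ->; rewrite mulmxDr.
  + by move=> a [r s] /= ->; rewrite scalemxAr.
  + move=> [r s] [r' s'] /= -> ->.
    have -> : (r, A *m r) - (r', A *m r') = (r - r', A *m (r - r')) by rewrite pairB mulmxBr.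
    by rewrite quad mulrn_wge0.
  + move=> H Hmon sub; apply/seteqP; split; last by [].
    move=> [u v] Huv; rewrite /graph_of /=.
    set e := v - A *m u.
    suff : e = 0 by move/eqP; rewrite subr_eq0 => /eqP.
    case: (eqVneq e 0) => [//|ne].
    have bpos := HA e ne.
    set a := dotv e e; set b := dotv e (A *m e).
    have a0 := dotv_ge0 _ _ e.
    have key : forall t : R, 0 < t -> t * a <= t ^+ 2 * b.
      move=> t t0.
      have Hin : H (u + t *: e, A *m (u + t *: e)) by apply: sub.
      have := Hmon (u, v) (u + t *: e, A *m (u + t *: e)) Huv Hin.
      have -> : (u, v) - (u + t *: e, A *m (u + t *: e)) = (- (t *: e), e - t *: (A *m e)).
        by rewrite pairB opprD addNKr mulmxDr scalemxAr opprD addrA.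
      rewrite stdSE /= dotvC -mulr2n pmulrn_lge0 // dotvNl dotvBr !dotvZl !dotvZr.
      rewrite -/a -/b => H0; rewrite expr2 -mulrA; lra.
    have ae : a = 0.
      apply/eqP; rewrite eq_le a0 andbT; apply: contrapT => /negP; rewrite -ltNge => apos.
      have tpos : 0 < a / (b + 1) by rewrite divr_gt0 // ltr_wpDr // ltW.
      have := key _ tpos.
      have hb : b + 1 != 0 by rewrite gt_eqF // ltr_wpDr // ltW.
      set t := a / (b + 1).
      have ht : t * (b + 1) = a by rewrite /t mulfVK.
      move=> H0.
      have e1 : t * (t * b) = t * a - t * t by rewrite -ht; ring.
      have tt : 0 < t * t by rewrite mulr_gt0.
      move: H0; rewrite expr2 -mulrA e1; lra.
    by apply: dotv_eq0.
  + move=> [r s] [r' s'] /= -> -> neq.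
    have nr : r - r' != 0.
      rewrite subr_eq0; apply/eqP => err; apply: neq; by rewrite err.
    have -> : (r, A *m r) - (r', A *m r') = (r - r', A *m (r - r')) by rewrite pairB mulmxBr.
    by rewrite quad pmulrn_lgt0 //; apply: HA.
Qed.
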